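(* Let $\ell\ge 3$ and $d\ge 1$ be integers. For every integer $t$ with $1\le t\le \ell-2$, the number of vertices of the $t$-iterated line digraph $L^t(CK(d,\ell))$ is $$(d^2-d+1)^t d^{\ell-t}+\frac{1}{2}(-1)^{\ell+1}(d-2)^t(d-1)d+\frac{1}{2}(-1)^{\ell} d^{t+1}(d+1).$$
   Context: Let $\Sigma=\{0,1,\dots,d\}$. The cyclic Kautz digraph $CK(d,\ell)$ has as vertices all sequences $a_1\ldots a_\ell\in\Sigma^\ell$ with $a_i\neq a_{i+1}$ for $1\le i\le \ell-1$ and $a_1\neq a_\ell$, with an arc from $a_1\ldots a_\ell$ to $b_1\ldots b_\ell$ iff both are vertices and $b_i=a_{i+1}$ for $1\le i\le\ell-1$. The line digraph $L(G)$ of a digraph $G$ has as vertices the arcs of $G$, with an arc from $(u,v)$ to $(v',w)$ iff $v'=v$. $L^0(G)=G$ and $L^t(G)=L(L^{t-1}(G))$. *)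

(* Defs.v *)
From mathcomp Require Import all_boot all_order all_algebra.
Set Implicit Arguments. Unset Strict Implicit. Unset Printing Implicit Defensive.

Record digraph := Digraph { vtx : finType; arc : rel vtx }.

Definition line_digraph (G : digraph) : digraph :=
  @Digraph {p : vtx G * vtx G | @arc G p.1 p.2}
           (fun x y => (val x).2 == (val y).1).

Definition iter_line (t : nat) (G : digraph) : digraph := iter t line_digraph G.

(* Alphabet Sigma = {0,...,d} is 'I_d.+1.  A sequence a_1...a_l is a vertex of
   CK(d,l) iff a_i <> a_(i+1) for 1 <= i <= l-1 and a_1 <> a_l
   (0-based indices below). *)
Definition ck_vertex (d l : nat) (s : l.-tuple 'I_d.+1) : bool :=
  [forall i : 'I_l, (i.+1 < l) ==> (nth ord0 s i != nth ord0 s i.+1)]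
  && (nth ord0 s 0 != nth ord0 s l.-1).

Definition ck_vtx (d l : nat) : finType := {s : l.-tuple 'I_d.+1 | ck_vertex s}.

Definition ck_arc (d l : nat) : rel (ck_vtx d l) :=
  fun a b => [forall i : 'I_l, (i.+1 < l) ==> (nth ord0 (val b) i == nth ord0 (val a) i.+1)].

Definition CK (d l : nat) : digraph := @Digraph (ck_vtx d l) (@ck_arc d l).

(* Main.v *)
Require Import Defs.
From mathcomp Require Import all_boot all_order all_algebra.
From mathcomp Require Import zify ring lra.
Import GRing.Theory Num.Theory.

Lemma big_sig_gen (R : Type) (idx : R) (op : Monoid.com_law idx)
  (T : finType) (P : pred T) (F : T -> R) :
  \big[op/idx]_(x : {x | P x}) F (val x) = \big[op/idx]_(i | P i) F i.
Proof.
rewrite (reindex_omap (val : {x | P x} -> T) insub); last first.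
  by move=> i Pi; rewrite insubT.
by apply: eq_bigl => -[i Pi] /=; rewrite insubT /= Pi eqxx.
Qed.

Fixpoint ew (G : digraph) (s : nat) (v : vtx G) : nat :=
  match s with
  | 0 => 1
  | s'.+1 => \sum_(w | @Defs.arc G v w) ew G s' w
  end.

Arguments ew {G}.
Definition TT (G : digraph) s : nat := \sum_(v : vtx G) ew s v.

Lemma ew_line G s (p : vtx (line_digraph G)) : ew s p = ew s (val p).2.
Proof.
elim: s p => [//|s IH] p /=.
transitivity (\sum_(q : vtx (line_digraph G)) if (val p).2 == (val q).1 then ew s (val q).2 else 0).
  by rewrite big_mkcond; apply: eq_bigr => q _; rewrite IH.
rewrite (@big_sig_gen _ _ _ _ _ (fun q : vtx G * vtx G => if (val p).2 == q.1 then ew s q.2 else 0)).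
rewrite big_mkcond -(pair_bigA _ (fun a b => if Defs.arc a b then (if (val p).2 == a then ew s b else 0) else 0)) /=.
transitivity (\sum_a if (val p).2 == a then \sum_(b | Defs.arc a b) ew s b else 0).
  apply: eq_bigr => a _; case: eqP => _; first by rewrite [RHS]big_mkcond.
  by rewrite big1 // => b _; case: ifP.
rewrite -big_mkcond /= (big_pred1 (val p).2) // => a /=; exact: eq_sym.
Qed.

Lemma TT_line G s : TT (line_digraph G) s = TT G s.+1.
Proof.
rewrite /TT.
transitivity (\sum_(q : vtx (line_digraph G)) ew s (val q).2).
  by apply: eq_bigr => q _; rewrite ew_line.
rewrite (@big_sig_gen _ _ _ _ _ (fun q : vtx G * vtx G => ew s q.2)) big_mkcond.
rewrite -(pair_bigA _ (fun a b => if Defs.arc a b then ew s b else 0)) /=.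
by apply: eq_bigr => a _; rewrite [RHS]big_mkcond.
Qed.

Lemma TT_iter t G s : TT (iter_line t G) s = TT G (s + t).
Proof.
elim: t s => [|t IH] s; first by rewrite addn0.
by rewrite /iter_line iterS TT_line -/(iter_line t G) IH addSnnS.
Qed.

Lemma card_iter t G : #|vtx (iter_line t G)| = TT G t.
Proof. by rewrite -[t]add0n -TT_iter /TT sum1_card. Qed.

Local Open Scope ring_scope.

Section S.
Variable d : nat.
Local Notation A := 'I_d.+1.

Lemma sum_eq1 (F : A -> rat) x : \sum_y (y == x)%:R * F y = F x.
Proof.
rewrite (bigD1 x) //= eqxx mul1r big1 ?addr0 // => y /negbTE ->; by rewrite mul0r.
Qed.

Lemma sum_neq (F : A -> rat) x : \sum_y (y != x)%:R * F y = \sum_y F y - F x.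
Proof.
rewrite (bigD1 x) //= [in RHS](bigD1 x) //= eqxx mul0r add0r addrAC subrr add0r.
by apply: eq_bigr => y ->; rewrite mul1r.
Qed.

Lemma sum_const (c : rat) : \sum_(y : A) c = (d.+1)%:R * c.
Proof. by rewrite sumr_const card_ord mulr_natl. Qed.

Lemma tuple_sum m (F : seq A -> rat) :
  \sum_(s : m.+1.-tuple A) F s = \sum_x \sum_(s : m.-tuple A) F (x :: s).
Proof.
rewrite pair_bigA /=.
rewrite (reindex (fun p : A * m.-tuple A => [tuple of p.1 :: p.2])) //=.
exists (fun s => (thead s, [tuple of behead s])).
  move=> [x s] _ /=; congr pair.
  by apply: val_inj.
by move=> s _; rewrite -tuple_eta.
Qed.

Lemma tuple0_sum (F : seq A -> rat) : \sum_(s : 0.-tuple A) F s = F [::].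
Proof.
rewrite (eq_bigr (fun _ => F [::])); last by move=> s _; rewrite (tuple0 s).
by rewrite sumr_const card_tuple expn0.
Qed.

Lemma indA (a b : bool) : ((a && b)%:R : rat) = a%:R * b%:R.
Proof. by case: a; case: b; rewrite /= ?mulr1 ?mulr0. Qed.

Definition srt (s : seq A) := sorted (fun a b : A => a != b) s.

Lemma srt_cons x s : s != [::] -> srt (x :: s) = (x != head ord0 s) && srt s.
Proof. by case: s. Qed.

Fixpoint W (j : nat) (x z : A) : rat :=
  match j with
  | 0 => (x == z)%:R
  | j'.+1 => \sum_y (y != x)%:R * W j' y z
  end.

Lemma walkW j (G : A -> A -> rat) :
  \sum_(w : j.+1.-tuple A) (srt w)%:R * G (head ord0 w) (last ord0 w)
  = \sum_x \sum_z W j x z * G x z.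
Proof.
elim: j G => [|j IH] G.
  rewrite (tuple_sum _ (fun w => (srt w)%:R * G (head ord0 w) (last ord0 w))).
  apply: eq_bigr => x _; rewrite (tuple0_sum (fun w => (srt (x :: w))%:R * G (head ord0 (x :: w)) (last ord0 (x :: w)))) /= mul1r.
  by under eq_bigr do rewrite eq_sym; rewrite sum_eq1.
rewrite (tuple_sum _ (fun w => (srt w)%:R * G (head ord0 w) (last ord0 w))).
transitivity (\sum_x \sum_(w : j.+1.-tuple A)
   (srt w)%:R * ((x != head ord0 w)%:R * G x (last ord0 w))).
  apply: eq_bigr => x _; apply: eq_bigr => w _.
  rewrite srt_cons; last by rewrite -size_eq0 size_tuple.
  have -> : last ord0 (x :: w) = last ord0 w.
    by case: w => -[|a w'] //.
  by rewrite indA /= [_ * (srt w)%:R]mulrC mulrA.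
apply: eq_bigr => x _.
rewrite (IH (fun y z => (x != y)%:R * G x z)) /=.
rewrite exchange_big /=; apply: eq_bigr => z _.
rewrite big_distrl /=; apply: eq_bigr => y _.
by rewrite eq_sym mulrA [_ * (_ != _)%:R]mulrC.
Qed.
Lemma last_cons (x : A) (w : seq A) : w != [::] -> last ord0 (x :: w) = last ord0 w.
Proof. by case: w. Qed.

Lemma tuple_nil m (w : m.+1.-tuple A) : (w : seq A) != [::].
Proof. by rewrite -size_eq0 size_tuple. Qed.

Arguments tuple_nil {m}.

Lemma split2 r j (G : seq A -> A -> rat) :
  \sum_(w : (r + j).+1.-tuple A) (srt w)%:R * G (take r.+1 w) (last ord0 w)
  = \sum_(p : r.+1.-tuple A) \sum_z (srt p)%:R * W j (last ord0 p) z * G p z.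
Proof.
elim: r G => [|r IH] G.
  transitivity (\sum_(w : j.+1.-tuple A) (srt w)%:R * G [:: head ord0 w] (last ord0 w)).
    apply: eq_bigr => w _; congr (_ * G _ _).
    by case: (tval w) (tuple_nil w) => [|a w'] //=; rewrite take0.
  rewrite (tuple_sum _ (fun p => \sum_z (srt p)%:R * W j (last ord0 p) z * G p z)).
  transitivity (\sum_x \sum_z W j x z * G [:: x] z); first exact: (walkW j (fun x z => G [:: x] z)).
  apply: eq_bigr => x _.
  rewrite (tuple0_sum (fun p => \sum_z (srt (x :: p))%:R * W j (last ord0 (x :: p)) z * G (x :: p) z)) /=.
  by apply: eq_bigr => z _; rewrite mul1r.
rewrite (tuple_sum _ (fun w => (srt w)%:R * G (take r.+2 w) (last ord0 w))).
transitivity (\sum_x \sum_(w : (r + j).+1.-tuple A)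
   (srt w)%:R * ((x != head ord0 (take r.+1 w))%:R * G (x :: take r.+1 w) (last ord0 w))).
  apply: eq_bigr => x _; apply: eq_bigr => w _.
  rewrite srt_cons ?tuple_nil // last_cons ?tuple_nil // indA /=.
  have -> : head ord0 (take r.+1 w) = head ord0 w by case: (tval w) (tuple_nil w) => [|a w'] //=; rewrite eqxx.
  by rewrite [_ * (srt w)%:R]mulrC mulrA.
rewrite (tuple_sum _ (fun p => \sum_z (srt p)%:R * W j (last ord0 p) z * G p z)).
apply: eq_bigr => x _.
rewrite (IH (fun p z => (x != head ord0 p)%:R * G (x :: p) z)).
apply: eq_bigr => p _; apply: eq_bigr => z _.
rewrite srt_cons ?tuple_nil // last_cons ?tuple_nil // indA.
by ring.
Qed.
Fixpoint Fl (x : A) (zs : seq A) : rat :=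
  match zs with
  | [::] => 1
  | z :: zs' => \sum_y (y != x)%:R * (y != z)%:R * Fl y zs'
  end.

Lemma Fl_head x (s : seq A) : s != [::] ->
  Fl x s = \sum_y (y != x)%:R * (y != head ord0 s)%:R * Fl y (behead s).
Proof. by case: s. Qed.

Fixpoint PC (t : nat) (f : A -> A -> rat) (x e : A) : rat :=
  match t with
  | 0 => f x e
  | t'.+1 => \sum_y \sum_e' (y != x)%:R * (e' != e)%:R * (y != e')%:R * PC t' f y e'
  end.

Lemma ladder t (h : A -> rat) x e :
  \sum_(p : t.+1.-tuple A) (head ord0 p == e)%:R * (srt p)%:R * h (last ord0 p) * Fl x (behead p)
  = PC t (fun _ e => h e) x e.
Proof.
elim: t x e => [|t IH] x e.
  rewrite (tuple_sum _ (fun p => (head ord0 p == e)%:R * (srt p)%:R * h (last ord0 p) * Fl x (behead p))) /=.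
  rewrite -(sum_eq1 h e); apply: eq_bigr => y _.
  rewrite (tuple0_sum (fun p => (y == e)%:R * (srt (y :: p))%:R * h (last y p) * Fl x p)) /=.
  by rewrite !mulr1.
rewrite (tuple_sum _ (fun p => (head ord0 p == e)%:R * (srt p)%:R * h (last ord0 p) * Fl x (behead p))) /=.
rewrite exchange_big /=.
transitivity (\sum_(p1 : t.+1.-tuple A) \sum_y (e != head ord0 p1)%:R * (srt p1)%:R * h (last ord0 p1)
   * ((y != x)%:R * (y != head ord0 p1)%:R * Fl y (behead p1))).
  apply: eq_bigr => p1 _.
  transitivity (\sum_e0 (e0 == e)%:R * ((srt (e0 :: p1))%:R * h (last e0 p1) * Fl x p1)).
    by apply: eq_bigr => e0 _; rewrite !mulrA.
  rewrite sum_eq1 srt_cons ?tuple_nil //.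
  have -> : last e p1 = last ord0 p1 by case: (tval p1) (tuple_nil p1).
  rewrite indA (Fl_head x _ (tuple_nil p1)) big_distrr /=.
  by apply: eq_bigr => y _; rewrite !mulrA.
transitivity (\sum_y \sum_e' (y != x)%:R * (e' != e)%:R * (y != e')%:R *
   \sum_(p : t.+1.-tuple A) (head ord0 p == e')%:R * (srt p)%:R * h (last ord0 p) * Fl y (behead p)); last first.
  by apply: eq_bigr => y _; apply: eq_bigr => e' _; rewrite IH.
rewrite exchange_big /=; apply: eq_bigr => y _.
under [RHS]eq_bigr do rewrite big_distrr /=.
rewrite [RHS]exchange_big /=; apply: eq_bigr => p1 _.
transitivity (\sum_e' (e' == head ord0 p1)%:R * ((y != x)%:R * (e' != e)%:R * (y != e')%:R *
   ((srt p1)%:R * h (last ord0 p1) * Fl y (behead p1)))).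
  by rewrite sum_eq1 [head ord0 p1 == e]eq_sym; ring.
apply: eq_bigr => e' _; rewrite [head _ _ == _]eq_sym; ring.
Qed.
Local Notation dd := (d%:R : rat).
Definition lam := dd ^+ 2 - dd + 1.
Definition aa t := (lam ^+ t + (dd - 1) * (2 - dd) ^+ t / 2 - (dd + 1) * (- dd) ^+ t / 2) / (dd + 1).
Definition bb t := (lam ^+ t + (dd - 1) * (2 - dd) ^+ t / 2 + (dd + 1) * (- dd) ^+ t / 2) / (dd + 1).
Definition zz t := (lam ^+ t - (2 - dd) ^+ t) / (dd + 1).

Lemma dd1 : dd + 1 != 0.
Proof. by rewrite natr1 pnatr_eq0. Qed.

Lemma recA t : aa t.+1 = lam * zz t + dd * (bb t - zz t).
Proof.
rewrite /aa /bb /zz !exprS; have := dd1 => h.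
rewrite /lam; field; by rewrite ?h ?pnatr_eq0.
Qed.
Lemma recB t : bb t.+1 = lam * zz t + dd * (aa t - zz t).
Proof.
rewrite /aa /bb /zz !exprS; have := dd1 => h.
rewrite /lam; field; by rewrite ?h ?pnatr_eq0.
Qed.
Lemma recZ t : zz t.+1 = lam * zz t + (dd - 1) * (aa t - zz t) + (dd - 1) * (bb t - zz t).
Proof.
rewrite /aa /bb /zz !exprS; have := dd1 => h.
rewrite /lam; field; by rewrite ?h ?pnatr_eq0.
Qed.

Lemma sum_ne1 (a : A) : \sum_z (z != a)%:R = dd.
Proof.
rewrite (eq_bigr (fun z => (z != a)%:R * 1)); last by move=> *; rewrite mulr1.
by rewrite sum_neq sum_const -natr1; ring.
Qed.

Lemma sum_nn (a b : A) : \sum_z (z != a)%:R * (z != b)%:R = dd - (a != b)%:R.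
Proof. by rewrite sum_neq sum_ne1. Qed.

Lemma S0 (x e : A) : \sum_y \sum_e' (y != x)%:R * (e' != e)%:R * (y != e')%:R
   = dd ^+ 2 - dd + (x != e)%:R.
Proof.
transitivity (\sum_y (y != x)%:R * (dd - (e != y)%:R)).
  apply: eq_bigr => y _; rewrite -sum_nn big_distrr /=; apply: eq_bigr => e' _.
  by rewrite [e' == y]eq_sym; ring.
rewrite sum_neq sumrB sum_const.
rewrite (eq_bigr (fun z => (z != e)%:R)); last by move=> z _; rewrite eq_sym.
rewrite sum_ne1 -natr1 [e == x]eq_sym; ring.
Qed.

Lemma S1 (x e c : A) : \sum_y \sum_e' (y != x)%:R * (e' != e)%:R * (y != e')%:R * (y == c)%:R
   = (c != x)%:R * (dd - (e != c)%:R).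
Proof.
transitivity (\sum_y (y == c)%:R * ((y != x)%:R * \sum_e' (e' != e)%:R * (e' != y)%:R) : rat).
  apply: eq_bigr => y _; rewrite big_distrr big_distrr /=; apply: eq_bigr => e' _.
  by rewrite [e' == y]eq_sym; ring.
by rewrite sum_eq1 sum_nn.
Qed.

Lemma S2 (x e c : A) : \sum_y \sum_e' (y != x)%:R * (e' != e)%:R * (y != e')%:R * (e' == c)%:R
   = (c != e)%:R * (dd - (x != c)%:R).
Proof.
rewrite exchange_big /=.
transitivity (\sum_e' (e' == c)%:R * ((e' != e)%:R * \sum_y (y != x)%:R * (y != e')%:R) : rat).
  apply: eq_bigr => e' _; rewrite big_distrr big_distrr /=; apply: eq_bigr => y _.
  by ring.
by rewrite sum_eq1 sum_nn.
Qed.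

Lemma Strans (x e c : A) (K0 K1 K2 : rat) :
  \sum_y \sum_e' (y != x)%:R * (e' != e)%:R * (y != e')%:R * (K0 + K1 * (y == c)%:R + K2 * (e' == c)%:R)
  = K0 * (dd ^+ 2 - dd + (x != e)%:R) + K1 * ((c != x)%:R * (dd - (e != c)%:R))
    + K2 * ((c != e)%:R * (dd - (x != c)%:R)).
Proof.
rewrite -(S0 x e) -(S1 x e c) -(S2 x e c) !big_distrr /= -!big_split /=.
apply: eq_bigr => y _.
rewrite !big_distrr /= -!big_split /=; apply: eq_bigr => e' _; ring.
Qed.

Lemma PC_class t (al be : rat) (c : A) (f : A -> A -> rat) :
  (forall x e, x != e -> f x e = al + be * (e == c)%:R) ->
  forall x e, x != e -> PC t f x e =
   al * lam ^+ t + be * (zz t + (aa t - zz t) * (x == c)%:R + (bb t - zz t) * (e == c)%:R).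
Proof.
move=> hf; elim: t => [|t IH] x e xe.
  rewrite /= hf // /zz /aa /bb !expr0 subrr !mul0r !add0r mulr1.
  congr (_ + _ * _); field; exact: dd1.
rewrite /=.
transitivity (\sum_y \sum_e' (y != x)%:R * (e' != e)%:R * (y != e')%:R *
   (al * lam ^+ t + be * zz t + be * (aa t - zz t) * (y == c)%:R + be * (bb t - zz t) * (e' == c)%:R)).
  apply: eq_bigr => y _; apply: eq_bigr => e' _.
  have [ye|ye] := eqVneq y e'; first by rewrite /= mulr0n !mulr0 !mul0r.
  by rewrite IH //; ring.
rewrite Strans xe.
have [xc|xc] := eqVneq x c.
  subst x; rewrite [e == c]eq_sym (negbTE xe) /= recA [lam ^+ _.+1]exprS /lam; ring.
have [ec|ec] := eqVneq e c.
  subst e; rewrite /= recB [lam ^+ _.+1]exprS /lam; ring.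
rewrite /= recZ [lam ^+ _.+1]exprS /lam; ring.
Qed.

Definition alp j := (dd ^+ j - (-1) ^+ j) / (dd + 1).

Lemma W_closed j (x z : A) : W j x z = alp j + (-1) ^+ j * (x == z)%:R.
Proof.
elim: j x => [|j IH] x.
  by rewrite /= /alp !expr0 subrr mul0r add0r mul1r.
rewrite /= (eq_bigr (fun y => (y != x)%:R * (alp j + (-1) ^+ j * (y == z)%:R))); last first.
  by move=> y _; rewrite IH.
rewrite sum_neq big_split /= sum_const.
rewrite (eq_bigr (fun y => (y == z)%:R * (-1) ^+ j)); last by move=> y _; rewrite mulrC.
rewrite sum_eq1 /alp !exprS -natr1; have := dd1 => h.
field; exact: h.
Qed.

Lemma final_alg j t : (dd + 1) * dd * (alp j * lam ^+ t + (-1) ^+ j * aa t) =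
  (dd ^+ 2 - dd + 1) ^+ t * dd ^+ j.+1
    + 1 / 2 * (-1) ^+ (j + t).+2 * (dd - 2) ^+ t * (dd - 1) * dd
    + 1 / 2 * (-1) ^+ (j + t).+1 * dd ^+ t.+1 * (dd + 1).
Proof.
rewrite /alp /aa /lam (_ : 2 - dd = - (dd - 2)); last by ring.
rewrite (exprNn (dd - 2)) (exprNn dd) !exprS (exprD (-1)); have := dd1 => h.
field; by rewrite ?h ?pnatr_eq0.
Qed.

Variable l : nat.

Lemma ckvE (s : l.-tuple A) : (0 < l)%N ->
  ck_vertex s = srt s && (head ord0 s != last ord0 s).
Proof.
move=> l0; rewrite /ck_vertex; congr andb.
  apply/forallP/sortedP => [H i lt|H i]; last first.
    by apply/implyP => lt; apply: H; rewrite size_tuple.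
  rewrite size_tuple in lt.
  by have := H (Ordinal (ltnW lt)); rewrite /= lt.
by rewrite nth0 -(nth_last ord0) size_tuple.
Qed.

Lemma arcE (v w : l.-tuple A) : (0 < l)%N ->
  [forall i : 'I_l, (i.+1 < l)%N ==> (nth ord0 w i == nth ord0 v i.+1)]
  = (take l.-1 w == behead v).
Proof.
move=> l0; apply/forallP/eqP => [H|E i].
  apply: (@eq_from_nth _ ord0).
    by rewrite size_behead size_tuple size_takel // size_tuple leq_pred.
  move=> i; rewrite size_takel ?size_tuple ?leq_pred // => lt.
  rewrite nth_take // nth_behead.
  have lt' : (i < l)%N by lia.
  by have := H (Ordinal lt'); rewrite /= (_ : (i.+1 < l)%N = true) ?implyTb; [move/eqP|lia].
apply/implyP => lt; apply/eqP; rewrite -nth_behead -E nth_take //; lia.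
Qed.

Lemma succ_pt (u v : seq A) : size u = l -> size v = l -> (2 <= l)%N -> srt v ->
  ((srt u && (head ord0 u != last ord0 u)) && (take l.-1 u == behead v)) =
  [&& u == rcons (behead v) (last ord0 u), last ord0 u != last ord0 v & last ord0 u != nth ord0 v 1].
Proof.
move=> su sv l2; case: v sv => [|v0 [|v1 vr]] //= sv; try lia.
case/lastP: u su => [|p y] su; first by move: su => /= ?; lia.
rewrite size_rcons in su.
have hp : take l.-1 (rcons p y) = p.
  by rewrite (_ : l.-1 = size p); [rewrite -cats1 takel_cat // take_size | lia].
rewrite hp last_rcons -rcons_cons eqseq_rcons eqxx andbT.
have [->|np] := eqVneq p (v1 :: vr); last by rewrite andbF.
move=> /andP[_ pv]; rewrite /srt /= rcons_path pv /= andbT.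
by rewrite [y == _]eq_sym [y == v1]eq_sym.
Qed.

Lemma tuple_pt (r : seq A) (H : seq A -> rat) : size r = l ->
  \sum_(u : l.-tuple A) (tval u == r)%:R * H u = H r.
Proof.
move=> sr; have sr' : size r == l by apply/eqP.
rewrite (bigD1 (Tuple sr')) //= eqxx mul1r big1 ?addr0 // => u nu.
rewrite (_ : (tval u == r) = false) ?mul0r //; apply/negbTE.
by apply: contra nu => /eqP e; apply/eqP/val_inj.
Qed.

Lemma succ_sum (v : ck_vtx d l) (H : seq A -> rat) : (2 <= l)%N ->
  \sum_(w : ck_vtx d l | ck_arc v w) H (val w) =
  \sum_y (y != last ord0 (val v))%:R * (y != nth ord0 (val v) 1)%:R * H (rcons (behead (val v)) y).
Proof.
move=> l2; rewrite big_mkcond /=.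
transitivity (\sum_(u : l.-tuple A | ck_vertex u)
   (if take l.-1 u == behead (val v) then H u else 0)).
  rewrite -(@big_sig_gen _ _ _ _ (fun u : l.-tuple A => ck_vertex u)
     (fun u : l.-tuple A => if take l.-1 u == behead (val v) then H u else 0)).
  by apply: eq_bigr => w _; rewrite /ck_arc arcE //; lia.
rewrite big_mkcond /=.
have vck := valP v.
have sv : srt (val v) by move: vck; rewrite ckvE; [case/andP|lia].
transitivity (\sum_(u : l.-tuple A)
   ([&& tval u == rcons (behead (val v)) (last ord0 u), last ord0 u != last ord0 (val v)
     & last ord0 u != nth ord0 (val v) 1])%:R * H u).
  apply: eq_bigr => u _; rewrite -succ_pt ?size_tuple // -ckvE; last lia.
  by case: (ck_vertex u); case: (_ == _); rewrite /= ?mul1r ?mul0r.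
transitivity (\sum_y \sum_(u : l.-tuple A) (tval u == rcons (behead (val v)) y)%:R *
   ((y != last ord0 (val v))%:R * (y != nth ord0 (val v) 1)%:R * H u)); last first.
  apply: eq_bigr => y _; rewrite (tuple_pt _ (fun s => (y != last ord0 (val v))%:R * (y != nth ord0 (val v) 1)%:R * H s)) //.
  by rewrite size_rcons size_behead size_tuple; lia.
rewrite exchange_big /=; apply: eq_bigr => u _.
transitivity (\sum_y (y == last ord0 u)%:R * ((tval u == rcons (behead (val v)) y)%:R *
   ((y != last ord0 (val v))%:R * (y != nth ord0 (val v) 1)%:R * H u))).
  by rewrite sum_eq1 !indA; ring.
apply: eq_bigr => y _.
have [->|ny] := eqVneq y (last ord0 u); first by rewrite mul1r.
rewrite mul0r (_ : (tval u == _) = false) ?mul0r //.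
apply/negbTE; apply: contra ny => /eqP ->; by rewrite last_rcons.
Qed.

Lemma e_CK s (v : ck_vtx d l) : (2 <= l)%N -> (s <= l - 2)%N ->
  ((@ew (CK d l) s v)%:R : rat) = Fl (last ord0 (val v)) (take s (behead (val v))).
Proof.
move=> l2; elim: s v => [|s IH] v hs; first by rewrite take0.
rewrite /= natr_sum.
transitivity (\sum_(w : ck_vtx d l | ck_arc v w) Fl (last ord0 (val w)) (take s (behead (val w)))).
  by apply: eq_bigr => w _; apply: IH; lia.
rewrite (succ_sum v (fun u => Fl (last ord0 u) (take s (behead u)))) //.
case: v hs => [[[|v0 [|v1 vr]] /= sz] ck] hs /=; have /eqP sz' := sz; try lia.
apply: eq_bigr => y _; rewrite last_rcons -cats1 takel_cat //; lia.
Qed.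

Lemma split2' m r j (G : seq A -> A -> rat) : m = (r + j).+1 ->
  \sum_(w : m.-tuple A) (srt w)%:R * G (take r.+1 w) (last ord0 w)
  = \sum_(p : r.+1.-tuple A) \sum_z (srt p)%:R * W j (last ord0 p) z * G p z.
Proof. by move=> e; subst m; exact: split2. Qed.

Lemma T_CK t : (3 <= l)%N -> (t <= l - 2)%N ->
  ((TT (CK d l) t)%:R : rat) =
  (dd + 1) * dd * (alp (l - 1 - t) * lam ^+ t + (-1) ^+ (l - 1 - t) * aa t).
Proof.
move=> l3 tl; set j := (l - 1 - t)%N.
have hm : l = (t + j).+1 by rewrite /j; lia.
rewrite /TT natr_sum.
transitivity (\sum_(v : ck_vtx d l) Fl (last ord0 (val v)) (take t (behead (val v)))).
  by apply: eq_bigr => v _; apply: e_CK; lia.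
rewrite (@big_sig_gen _ _ _ _ (fun u : l.-tuple A => ck_vertex u)
   (fun u : l.-tuple A => Fl (last ord0 u) (take t (behead u)))).
rewrite big_mkcond /=.
transitivity (\sum_(u : l.-tuple A) (srt u)%:R *
   (fun p z => (head ord0 p != z)%:R * Fl z (behead p)) (take t.+1 u) (last ord0 u)).
  apply: eq_bigr => u _; rewrite ckvE; last lia.
  have -> : head ord0 (take t.+1 u) = head ord0 u by case: (tval u).
  have -> : behead (take t.+1 u) = take t (behead u) by case: (tval u).
  by case: (srt u); case: (head ord0 u != last ord0 u); rewrite /= ?mul1r ?mul0r.
rewrite (split2' l t j (fun p z => (head ord0 p != z)%:R * Fl z (behead p)) hm) /=.
rewrite exchange_big /=.
transitivity (\sum_(z : A) (dd * (alp j * lam ^+ t + (-1) ^+ j * aa t))); last first.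
  by rewrite sum_const -natr1; ring.
apply: eq_bigr => z _.
transitivity (\sum_e (e != z)%:R * \sum_(p : t.+1.-tuple A)
   (head ord0 p == e)%:R * (srt p)%:R * W j (last ord0 p) z * Fl z (behead p)).
  under [RHS]eq_bigr do rewrite big_distrr /=.
  rewrite [RHS]exchange_big /=; apply: eq_bigr => p _.
  transitivity (\sum_e (e == head ord0 p)%:R * ((e != z)%:R * ((srt p)%:R * W j (last ord0 p) z * Fl z (behead p)))).
    by rewrite sum_eq1; ring.
  by apply: eq_bigr => e _; rewrite [head _ _ == _]eq_sym; ring.
transitivity (\sum_e (e != z)%:R * (alp j * lam ^+ t + (-1) ^+ j * aa t)); last first.
  rewrite sum_neq sum_const -natr1; ring.
apply: eq_bigr => e _.
rewrite (ladder t (fun e' => W j e' z) z e).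
have [ez|ez] := eqVneq e z; first by rewrite !mul0r.
rewrite (@PC_class t (alp j) ((-1) ^+ j) z (fun _ e' => W j e' z)).
- by rewrite eqxx (negbTE ez) /=; ring.
- by move=> x e' _; rewrite W_closed.
- by rewrite eq_sym.
Qed.
End S.

Theorem theorem4 (d l t : nat) :
  (3 <= l)%N -> (1 <= d)%N -> (1 <= t)%N -> (t <= l - 2)%N ->
  (#|vtx (iter_line t (CK d l))|%:R : rat) =
    (d%:R ^+ 2 - d%:R + 1) ^+ t * d%:R ^+ (l - t)
    + 1 / 2 * (-1) ^+ l.+1 * (d%:R - 2) ^+ t * (d%:R - 1) * d%:R
    + 1 / 2 * (-1) ^+ l * d%:R ^+ t.+1 * (d%:R + 1).
Proof.
move=> l3 d1 t1 tl.
rewrite card_iter (T_CK d l t l3 tl).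
have hl : l = ((l - 1 - t) + t).+1 by lia.
have hlt : (l - t)%N = (l - 1 - t).+1 by lia.
rewrite final_alg hlt.
by rewrite (_ : (l - 1 - t + t).+1 = l); last lia.
Qed.
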